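(* Let $k\ge 3$, let $\alpha$ be a primitive element of $\mathbb{F}_{2^k}$, and let $0\le j\le 2^k-2$. Define $S_j=\{\{(\alpha^j,\alpha^j x): x\in B_i\} : 1\le i\le 6\}$ and $\mathbb{S}_j=\{\langle A\rangle : A\in S_j\}$. Then $\mathbb{S}_j$ consists of six $k$-dimensional subspaces of $\mathbb{F}_2^{2k}$, each contained in $V_{\mathbf 0}^{(2k,k)}\cup V_{\alpha^j}^{(2k,k)}$, and every $2$-dimensional subspace $X\subseteq V_{\mathbf 0}^{(2k,k)}\cup V_{\alpha^j}^{(2k,k)}$ that is not contained in $V_{\mathbf 0}^{(2k,k)}$ is contained in at least one element of $\mathbb{S}_j$.
   Context: $\mathbb{F}_2^k$ is identified with $\mathbb{F}_{2^k}$ via a fixed $\mathbb{F}_2$-linear isomorphism (elements are written as binary $k$-tuples or as field elements interchangeably); $(a,b)\in\mathbb{F}_2^{2k}$ denotes concatenation of $a,b\in\mathbb{F}_2^k$, and $\langle A\rangle$ is the $\mathbb{F}_2$-span of $A$. For $x\in\mathbb{F}_2^\ell$, $V_x^{(n,\ell)}$ denotes the set of vectors of $\mathbb{F}_2^n$ whose first $\ell$ coordinates equal $x$. The sets $B_1,\dots,B_6\subseteq\mathbb{F}_2^k$ ($k\ge3$) are: $B_1$ = vectors with first coordinate $0$; $B_2$ = first coordinate $1$; $B_3$ = first two coordinates $00$ or $10$; $B_4$ = first two coordinates $01$ or $11$; $B_5$ = first two coordinates $00$ or $11$; $B_6$ = first two coordinates $01$ or $10$. *)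

(* Defs.v *)
From HB Require Import structures.
From mathcomp Require Import all_boot all_order all_algebra all_field.
Set Implicit Arguments. Unset Strict Implicit. Unset Printing Implicit Defensive.
Import GRing.Theory.

(* c-th coordinate (0-based) of a vector of F_2^n, i.e. x_{c+1}; 0 if out of range *)
Definition coordF2 (n : nat) (x : 'rV['F_2]_n) (c : nat) : 'F_2 :=
  if @insub nat (fun m => m < n)%N 'I_n c is Some c' then x ord0 c' else 0%R.

Definition Bset (n : nat) (i : nat) : {set 'rV['F_2]_n} :=
  match i with
  | 1 => [set x | coordF2 x 0 == 0%R]
  | 2 => [set x | coordF2 x 0 == 1%R]
  | 3 => [set x | ((coordF2 x 0, coordF2 x 1) == (0%R, 0%R))
                  || ((coordF2 x 0, coordF2 x 1) == (1%R, 0%R))]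
  | 4 => [set x | ((coordF2 x 0, coordF2 x 1) == (0%R, 1%R))
                  || ((coordF2 x 0, coordF2 x 1) == (1%R, 1%R))]
  | 5 => [set x | ((coordF2 x 0, coordF2 x 1) == (0%R, 0%R))
                  || ((coordF2 x 0, coordF2 x 1) == (1%R, 1%R))]
  | 6 => [set x | ((coordF2 x 0, coordF2 x 1) == (0%R, 1%R))
                  || ((coordF2 x 0, coordF2 x 1) == (1%R, 0%R))]
  | _ => set0
  end.

(* The set {(alpha^j, alpha^j x) : x in B_i} in F_2^{2k}, where F_2^k is
   identified with the field F via phi : F -> F_2^k, and (a,b) is row_mx a b. *)
Definition Sset (F : finFieldType) (k : nat) (phi : F -> 'rV['F_2]_k)
    (alpha : F) (j i : nat) : {set 'rV['F_2]_(k + k)} :=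
  [set row_mx (phi (alpha ^+ j)%R) (phi (alpha ^+ j * y)%R)
     | y in [set y : F | phi y \in Bset k i]].

Definition SSpan (F : finFieldType) (k : nat) (phi : F -> 'rV['F_2]_k)
    (alpha : F) (j i : nat) : {vspace 'rV['F_2]_(k + k)} :=
  (<<enum (Sset phi alpha j i)>>)%VS.

Definition Vfirst (k : nat) (x : 'rV['F_2]_k) : {set 'rV['F_2]_(k + k)} :=
  [set v | lsubmx v == x].

(* Main.v *)
Require Import Defs.
From HB Require Import structures.
From mathcomp Require Import all_boot all_order all_algebra all_field.
Set Implicit Arguments. Unset Strict Implicit. Unset Printing Implicit Defensive.
Import GRing.Theory.
Local Open Scope ring_scope.

Lemma F2_cases (c : 'F_2) : c = 0 \/ c = 1.
Proof. by case: c => [[|[|n]] h]; [left; apply/val_inj | right; apply/val_inj |]. Qed.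

Lemma coordF2D n (x y : 'rV['F_2]_n) c : coordF2 (x + y) c = coordF2 x c + coordF2 y c.
Proof. rewrite /coordF2; case: insubP => [c' _ _|_]; by rewrite ?mxE ?addr0. Qed.
Lemma coordF20 n c : coordF2 (0 : 'rV['F_2]_n) c = 0.
Proof. rewrite /coordF2; case: insubP => [c' _ _|_]; by rewrite ?mxE. Qed.

Definition lfun n (i : nat) (x : 'rV['F_2]_n) : 'F_2 :=
  match i with
  | 1 | 2 => coordF2 x 0
  | 3 | 4 => coordF2 x 1
  | _ => coordF2 x 0 + coordF2 x 1
  end.
Definition bb (i : nat) : 'F_2 := if odd i then 0 else 1.

Lemma lfunD n i (x y : 'rV['F_2]_n) : lfun i (x + y) = lfun i x + lfun i y.
Proof.
rewrite /lfun; do 5?[case: i => [|i]]; rewrite ?coordF2D //;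
  by rewrite addrACA.
Qed.
Lemma lfun0 n i : lfun i (0 : 'rV['F_2]_n) = 0.
Proof. by rewrite /lfun; do 5?[case: i => [|i]]; rewrite ?coordF20 ?addr0. Qed.

Lemma Bset_l n i (x : 'rV['F_2]_n) : (1 <= i <= 6)%N ->
  (x \in Bset n i) = (lfun i x == bb i).
Proof.
move=> hi; do 7?[case: i hi => [|i] hi //]; rewrite /Bset /lfun /bb inE;
 case: (F2_cases (coordF2 x 0)) => h0; case: (F2_cases (coordF2 x 1)) => h1; rewrite ?h0 ?h1; by [].
Qed.

Lemma F2_scale_inj n (u : 'rV['F_2]_n) (s t : 'F_2) : u != 0 -> s *: u = t *: u -> s = t.
Proof.
move=> u0; case: (F2_cases s) => ->; case: (F2_cases t) => -> //;
 rewrite scale0r scale1r => h.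
- by move: u0; rewrite -h eqxx.
- by move: u0; rewrite h eqxx.
Qed.

Lemma F2_11 : (1 + 1 : 'F_2) = 0. Proof. exact/eqP. Qed.

Lemma exists_i n (x y : 'rV['F_2]_n) : exists2 i, (1 <= i <= 6)%N & lfun i x = 0 /\ lfun i y = bb i.
Proof.
case: (F2_cases (coordF2 x 0)) => h1; case: (F2_cases (coordF2 x 1)) => h2;
case: (F2_cases (coordF2 y 0)) => h3; case: (F2_cases (coordF2 y 1)) => h4;
 first [ by exists 1%N; rewrite /lfun /bb ?h1 ?h2 ?h3 ?h4 ?F2_11 ?addr0 ?add0r
       | by exists 2%N; rewrite /lfun /bb ?h1 ?h2 ?h3 ?h4 ?F2_11 ?addr0 ?add0r
       | by exists 3%N; rewrite /lfun /bb ?h1 ?h2 ?h3 ?h4 ?F2_11 ?addr0 ?add0r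
       | by exists 4%N; rewrite /lfun /bb ?h1 ?h2 ?h3 ?h4 ?F2_11 ?addr0 ?add0r
       | by exists 5%N; rewrite /lfun /bb ?h1 ?h2 ?h3 ?h4 ?F2_11 ?addr0 ?add0r
       | by exists 6%N; rewrite /lfun /bb ?h1 ?h2 ?h3 ?h4 ?F2_11 ?addr0 ?add0r ].
Qed.

Lemma lfunN n i (x : 'rV['F_2]_n) : lfun i (- x) = - lfun i x.
Proof. by apply/(addrI (lfun i x)); rewrite -lfunD !subrr lfun0. Qed.
Lemma lfunB n i (x y : 'rV['F_2]_n) : lfun i (x - y) = lfun i x - lfun i y.
Proof. by rewrite lfunD lfunN. Qed.
Section Main.
Variables (k : nat) (F : finFieldType) (phi : F -> 'rV['F_2]_k) (psi : 'rV['F_2]_k -> F).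
Variables (alpha : F) (j : nat).
Hypothesis phiD : forall x y : F, phi (x + y) = phi x + phi y.
Hypothesis phiK : cancel phi psi.
Hypothesis psiK : cancel psi phi.
Let a := alpha ^+ j.
Hypothesis a0 : a != 0.
Let u := phi a.

Lemma phi0 : phi 0 = 0.
Proof. by apply/(addrI (phi 0)); rewrite -phiD !addr0. Qed.
Lemma phiN x : phi (- x) = - phi x.
Proof. by apply/(addrI (phi x)); rewrite -phiD !subrr phi0. Qed.
Lemma phiB x y : phi (x - y) = phi x - phi y.
Proof. by rewrite phiD phiN. Qed.
Lemma phi_inj : injective phi. Proof. exact: can_inj phiK. Qed.
Lemma u0 : u != 0.
Proof. by apply/eqP => h; move/eqP: a0; apply; apply: phi_inj; rewrite phi0. Qed.

Definition M (r : 'rV['F_2]_k) := phi (a^-1 * psi r).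
Lemma MD r s : M (r + s) = M r + M s.
Proof.
rewrite /M -phiD -mulrDr; congr (phi (_ * _)).
by apply: phi_inj; rewrite phiD !psiK.
Qed.
Lemma M_phi y : M (phi (a * y)) = phi y.
Proof. by rewrite /M phiK mulKf. Qed.
Lemma phi_M r : phi (a * (a^-1 * psi r)) = r.
Proof. by rewrite mulVKf // psiK. Qed.
Lemma M0 : M 0 = 0.
Proof. by apply/(addrI (M 0)); rewrite -MD !addr0. Qed.

Definition P i (v : 'rV['F_2]_(k + k)) :=
  exists t : 'F_2, lsubmx v = t *: u /\ lfun i (M (rsubmx v)) = t * bb i.

Lemma P0 i : P i 0.
Proof. by exists 0; rewrite !linear0 M0 lfun0 scale0r mul0r. Qed.

Lemma PD i v w : P i v -> P i w -> P i (v + w).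
Proof.
move=> [t1 [h1 h1']] [t2 [h2 h2']]; exists (t1 + t2).
by rewrite !linearD /= h1 h2 scalerDl MD lfunD h1' h2' mulrDl.
Qed.

Lemma PZ i c v : P i v -> P i (c *: v).
Proof.
case: (F2_cases c) => ->; first by rewrite scale0r => _; apply: P0.
by rewrite scale1r.
Qed.

Lemma P_span i (X : seq 'rV['F_2]_(k + k)) :
  (forall x, x \in X -> P i x) -> forall v, v \in <<X>>%VS -> P i v.
Proof.
elim: X => [_ v|x X IH hX v].
  by rewrite span_nil memv0 => /eqP ->; apply: P0.
rewrite span_cons => /memv_addP [v1 /vlineP [c ->] [v2 hv2 ->]].
apply: PD; first by apply: PZ; apply: hX; rewrite mem_head.
by apply: IH => // y hy; apply: hX; rewrite in_cons hy orbT.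
Qed.

Lemma P_Sset i v : (1 <= i <= 6)%N -> v \in Sset phi alpha j i -> P i v.
Proof.
move=> hi /imsetP [y]; rewrite inE Bset_l // => /eqP hy ->.
by exists 1; rewrite row_mxKl row_mxKr scale1r mul1r M_phi hy.
Qed.

Lemma P_SSpan i v : (1 <= i <= 6)%N -> v \in SSpan phi alpha j i -> P i v.
Proof.
move=> hi; apply: P_span => x; rewrite mem_enum; exact: P_Sset.
Qed.


Hypothesis k2 : (1 < k)%N.
Let k0 : (0 < k)%N := ltnW k2.
Definition e0 : 'rV['F_2]_k := delta_mx 0 (Ordinal k0).
Definition e1 : 'rV['F_2]_k := delta_mx 0 (Ordinal k2).
Lemma ce00 : coordF2 e0 0 = 1. Proof. by rewrite /coordF2 insubT /= mxE. Qed.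
Lemma ce01 : coordF2 e0 1 = 0. Proof. by rewrite /coordF2 insubT /= mxE. Qed.
Lemma ce10 : coordF2 e1 0 = 0. Proof. by rewrite /coordF2 insubT /= mxE. Qed.
Lemma ce11 : coordF2 e1 1 = 1. Proof. by rewrite /coordF2 insubT /= mxE. Qed.

Definition cw i : F := psi (if (i == 3%N) || (i == 4%N) then e1 else e0).
Lemma cwP i : (1 <= i <= 6)%N -> lfun i (phi (cw i)) = 1.
Proof.
rewrite /cw psiK.
by do 7?[case: i => [|i] //]; rewrite /lfun /= ?ce00 ?ce01 ?ce10 ?ce11 ?addr0.
Qed.

Lemma exists_c i : (1 <= i <= 6)%N -> exists c, lfun i (phi c) = bb i.
Proof.
move=> hi; rewrite /bb; case: ifP => _; first by exists 0; rewrite phi0 lfun0.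
by exists (cw i); rewrite cwP.
Qed.

Lemma Sset_mem i y : (1 <= i <= 6)%N -> lfun i (phi y) = bb i ->
  row_mx u (phi (a * y)) \in SSpan phi alpha j i.
Proof.
move=> hi hy; apply: memv_span; rewrite mem_enum; apply/imsetP; exists y => //.
by rewrite inE Bset_l // hy.
Qed.

Lemma SSpan_P i v : (1 <= i <= 6)%N -> P i v -> v \in SSpan phi alpha j i.
Proof.
move=> hi [t [hl hr]]; set y := a^-1 * psi (rsubmx v).
have hv : v = row_mx (t *: u) (phi (a * y)) by rewrite phi_M -hl hsubmxK.
have hy : lfun i (phi y) = t * bb i by [].
case: (F2_cases t) => ht; rewrite ht in hv hy.
- have [c hc] := exists_c hi.
  have -> : v = row_mx u (phi (a * (y + c))) - row_mx u (phi (a * c)).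
    by rewrite hv opp_row_mx add_row_mx subrr scale0r mulrDr phiD addrK.
  by apply: memvB; apply: Sset_mem => //; rewrite phiD lfunD hy hc mul0r add0r.
- by rewrite hv scale1r; apply: Sset_mem; rewrite // hy mul1r.
Qed.

Lemma SSpanE i v : (1 <= i <= 6)%N -> (v \in SSpan phi alpha j i) <-> P i v.
Proof. by move=> hi; split; [apply: P_SSpan | apply: SSpan_P]. Qed.


Definition g i (y : F) : 'rV['F_2]_(k + k) :=
  row_mx (lfun i (phi y) *: u)
    (phi (a * (if (bb i == 0) && (lfun i (phi y) == 1) then y - cw i else y))).

Lemma g_inj i : injective (g i).
Proof.
move=> y1 y2 h.
have hl := congr1 lsubmx h; rewrite !row_mxKl in hl; have e := F2_scale_inj u0 hl.
have hr := congr1 rsubmx h; rewrite !row_mxKr in hr.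
move/phi_inj/(mulfI a0): hr; rewrite e; case: ifP => _ //; exact: addIr.
Qed.

Lemma g_P i y : (1 <= i <= 6)%N -> P i (g i y).
Proof.
move=> hi; exists (lfun i (phi y)); rewrite /g row_mxKl row_mxKr M_phi; split => //.
case: ifP.
  by move=> /andP [/eqP hb /eqP hl]; rewrite phiB lfunB hb hl cwP // subrr mulr0.
move=> hn; case: (F2_cases (bb i)) hn => ->; last by rewrite mulr1.
rewrite eqxx /= mulr0; case: (F2_cases (lfun i (phi y))) => -> //; by rewrite eqxx.
Qed.

Lemma P_g i v : (1 <= i <= 6)%N -> P i v -> exists y, v = g i y.
Proof.
move=> hi [t [hl hr]]; set y := a^-1 * psi (rsubmx v).
have hv : v = row_mx (t *: u) (phi (a * y)) by rewrite phi_M -hl hsubmxK.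
have hy : lfun i (phi y) = t * bb i by [].
rewrite /g; case: (F2_cases (bb i)) => hb; rewrite hb ?mulr0 ?mulr1 in hy; rewrite hb.
- case: (F2_cases t) => ht; rewrite ht in hv.
  + by exists y; rewrite hy.
  + exists (y + cw i); rewrite phiD lfunD hy cwP // add0r eqxx /= addrK.
    exact: hv.
- by exists y; rewrite hy hv.
Qed.

Lemma card_SSpan i : (1 <= i <= 6)%N -> #|SSpan phi alpha j i| = #|F|.
Proof.
move=> hi; rewrite -(card_imset _ (@g_inj i)); apply: eq_card => v.
apply/idP/imsetP.
  by move/(P_SSpan hi)/(P_g hi) => [y ->]; exists y.
by move=> [y _ ->]; apply: SSpan_P => //; apply: g_P.
Qed.


Lemma SSpan_V i v : (1 <= i <= 6)%N -> v \in SSpan phi alpha j i ->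
  v \in Vfirst 0 :|: Vfirst u.
Proof.
move=> hi /(P_SSpan hi) [t [hl _]]; rewrite !inE hl.
by case: (F2_cases t) => ->; rewrite ?scale0r ?scale1r eqxx ?orbT.
Qed.

Definition w (t : 'F_2) (x : 'rV['F_2]_k) := row_mx (t *: u) (phi (a * psi x)).
Lemma Pw i t x : P i (w t x) <-> lfun i x = t * bb i.
Proof.
rewrite /w; split.
  move=> [t' [hl hr]]; rewrite row_mxKl in hl; rewrite row_mxKr M_phi psiK in hr.
  by rewrite (F2_scale_inj u0 hl).
by move=> h; exists t; rewrite row_mxKl row_mxKr M_phi psiK.
Qed.

Lemma SSpan_inj i1 i2 : (1 <= i1 <= 6)%N -> (1 <= i2 <= 6)%N ->
  SSpan phi alpha j i1 = SSpan phi alpha j i2 -> i1 = i2.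
Proof.
move=> hi1 hi2 E.
have key : forall (t : 'F_2) (x : 'rV['F_2]_k), (lfun i1 x == t * bb i1) = (lfun i2 x == t * bb i2).
  move=> t x; apply/idP/idP => /eqP h; apply/eqP.
    by apply/Pw; apply/(SSpanE _ hi2); rewrite -E; apply/(SSpanE _ hi1); apply/Pw.
  by apply/Pw; apply/(SSpanE _ hi1); rewrite E; apply/(SSpanE _ hi2); apply/Pw.
move: (key 0 e0) (key 0 e1) (key 1 e0); clear key E.
do 7?[case: i1 hi1 => [|i1] hi1 //];
do 7?[case: i2 hi2 => [|i2] hi2 //];
rewrite /lfun /bb /= ?ce00 ?ce01 ?ce10 ?ce11 ?mul0r ?mul1r ?addr0 ?add0r //.
Qed.


Lemma rv_addxx n (x : 'rV['F_2]_n) : x + x = 0.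
Proof. by rewrite -{1 2}[x]scale1r -scalerDl F2_11 scale0r. Qed.

Lemma cover (X : {vspace 'rV['F_2]_(k + k)}) : \dim X = 2%N ->
  (forall v, v \in X -> v \in Vfirst 0 :|: Vfirst u) ->
  ~ (forall v, v \in X -> v \in Vfirst 0) ->
  exists2 i, (1 <= i <= 6)%N & (X <= SSpan phi alpha j i)%VS.
Proof.
move=> dX hX hn.
have hl v : v \in X -> lsubmx v = 0 \/ lsubmx v = u.
  by move/hX; rewrite !inE => /orP [] /eqP ->; [left|right].
have [v1 v1X hv1] : exists2 v1, v1 \in X & lsubmx v1 = u.
  case: (boolP [exists v, (v \in X) && (lsubmx v == u)]).
    by move=> /existsP [v /andP [? /eqP ?]]; exists v.
  move=> hne; exfalso; apply: hn => v vX; rewrite inE.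
  case: (hl v vX) => h; first by rewrite h.
  by move: hne; rewrite negb_exists => /forallP /(_ v); rewrite vX h eqxx.
have [v2 v2X hv2] : exists2 v2, v2 \in X & v2 \notin <[v1]>%VS.
  case: (boolP (all (fun x => x \in <[v1]>%VS) (vbasis X))) => hall.
    exfalso; have : (X <= <[v1]>)%VS.
      rewrite -(span_basis (vbasisP X)); apply/span_subvP => x hx; exact: (allP hall).
    by move/dimvS; rewrite dX dim_vline; case: (v1 != 0).
  move: hall; rewrite -has_predC => /hasP [x hx /= hxn]; exists x => //.
  exact: vbasis_mem.
set w := if lsubmx v2 == 0 then v2 else v1 + v2.
have wX : w \in X by rewrite /w; case: ifP => _; rewrite ?memvD.
have hw : lsubmx w = 0.
  rewrite /w; case: ifP => [/eqP //|/negbT h]; rewrite linearD /= hv1.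
  case: (hl v2 v2X) => h2; first by rewrite h2 eqxx in h.
  by rewrite h2 rv_addxx.
have w0 : w != 0.
  rewrite /w; case: ifP => _.
    by apply: contraNneq hv2 => ->; exact: mem0v.
  apply: contraNneq hv2 => h; apply/vlineP; exists (-1); apply/eqP.
  by rewrite scaleN1r -addr_eq0 addrC h.
have free2 : free [:: v1; w].
  rewrite free_cons seq1_free w0 andbT span_seq1; apply/negP => /vlineP [c hc].
  move: (congr1 lsubmx hc); rewrite linearZ /= hw scaler0 hv1 => /eqP.
  by rewrite (negbTE u0).
have sub1 : (<<[:: v1; w]>> <= X)%VS.
  by apply/span_subvP => x; rewrite !inE => /orP [] /eqP ->.
have eqX : <<[:: v1; w]>>%VS = X.
  by apply/eqP; rewrite eqEdim sub1 dX; move/eqP: free2 => ->.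
have [i hi [hiw hiv]] := exists_i (M (rsubmx w)) (M (rsubmx v1)).
exists i => //; rewrite -eqX; apply/span_subvP => x; rewrite !inE => /orP [] /eqP ->;
  apply: SSpan_P => //.
- by exists 1; rewrite hv1 scale1r hiv mul1r.
- by exists 0; rewrite hw scale0r hiw mul0r.
Qed.

End Main.


Theorem mainTheorem6 (k : nat) (F : finFieldType) (phi : F -> 'rV['F_2]_k)
    (alpha : F) (j : nat) :
  (3 <= k)%N ->
  #|F| = (2 ^ k)%N ->
  (forall x y : F, phi (x + y)%R = (phi x + phi y)%R) ->
  bijective phi ->
  ((2 ^ k - 1)%N.-primitive_root alpha)%R ->
  (j <= 2 ^ k - 2)%N ->
  [/\ (* the six spans are pairwise distinct *)
      (forall i1 i2, (1 <= i1 <= 6)%N -> (1 <= i2 <= 6)%N ->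
         SSpan phi alpha j i1 = SSpan phi alpha j i2 -> i1 = i2),
      (* each is k-dimensional and lies in V_0 u V_{alpha^j} *)
      (forall i, (1 <= i <= 6)%N ->
         \dim (SSpan phi alpha j i) = k /\
         (forall v, v \in SSpan phi alpha j i ->
            v \in Vfirst 0%R :|: Vfirst (phi (alpha ^+ j)%R))) &
      (* covering of 2-dimensional subspaces *)
      (forall X : {vspace 'rV['F_2]_(k + k)},
         \dim X = 2%N ->
         (forall v, v \in X -> v \in Vfirst 0%R :|: Vfirst (phi (alpha ^+ j)%R)) ->
         ~ (forall v, v \in X -> v \in Vfirst 0%R) ->
         exists2 i, (1 <= i <= 6)%N & (X <= SSpan phi alpha j i)%VS)].
Proof.
move=> hk hF phiD [psi phiK psiK] hprim hj.
have k2 : (1 < k)%N by apply: leq_trans hk.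
have al0 : alpha != 0.
  apply/eqP => h; move: (prim_expr_order hprim); rewrite h expr0n.
  have -> : (2 ^ k - 1 == 0)%N = false.
    rewrite subn_eq0; apply/negbTE; rewrite -ltnNge; exact: leq_trans k2 (ltnW (ltn_expl k (ltnSn 1))).
  by move/eqP; rewrite eq_sym oner_eq0.
have a0 : alpha ^+ j != 0 by rewrite expf_neq0.
split.
- by move=> i1 i2 h1 h2; apply: (SSpan_inj phiD phiK psiK a0 k2 h1 h2).
- move=> i hi; split; last by move=> v; apply: (SSpan_V phiD phiK psiK a0 hi).
  have := card_vspace (SSpan phi alpha j i).
  rewrite (card_SSpan phiD phiK psiK a0 k2 hi) hF card_Fp //.
  by move/(expnI (ltnSn 1)).
- exact: (cover phiD phiK psiK a0).
Qed.
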